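(* For every $n$-variable Boolean function $f$ it holds that $NN(f)\le(1+o(1))\frac{2^{n+2}}{n}$, where $o(1)$ denotes a quantity depending only on $n$ that tends to $0$ as $n\to\infty$.
   Context: For a Boolean function $f:\{0,1\}^n\to\{0,1\}$, a nearest neighbor representation is a pair of disjoint sets $(P,N)$ of points of $\mathbb R^n$ such that for every $a\in\{0,1\}^n$: if $f(a)=1$, there is $b\in P$ with $d(a,b)<d(a,c)$ for all $c\in N$; if $f(a)=0$, there is $b\in N$ with $d(a,b)<d(a,c)$ for all $c\in P$ ($d$ = Euclidean distance). $NN(f)$ is the minimum of $|P\cup N|$ over all nearest neighbor representations of $f$. *)

(* Defs.v *)
From HB Require Import structures.
From mathcomp Require Import all_boot all_order all_algebra.
From mathcomp Require Import all_classical all_reals all_analysis.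
From mathcomp Require Import Rstruct Rstruct_topology.
From Stdlib Require Import Rdefinitions.

Set Implicit Arguments.
Unset Strict Implicit.
Unset Printing Implicit Defensive.
Import Order.TTheory GRing.Theory Num.Theory.
Local Open Scope ring_scope.

Definition cube (n : nat) := {ffun 'I_n -> bool}.

Definition pt (n : nat) := 'rV[R]_n.

Definition emb (n : nat) (a : cube n) : pt n := \row_i ((a i : nat)%:R).

Definition dist (n : nat) (x y : pt n) : R :=
  Num.sqrt (\sum_(i < n) (x ord0 i - y ord0 i) ^+ 2).

(* (P, N) is a nearest neighbor representation of f.  Finite sets of points are
   given as duplicate-free lists; uniq (P ++ N) also encodes disjointness. *)
Definition is_NNrep (n : nat) (f : cube n -> bool) (P N : seq (pt n)) : Prop :=
  uniq (P ++ N) /\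
  forall a : cube n,
    (f a -> exists2 b, b \in P & forall c, c \in N -> dist (emb a) b < dist (emb a) c) /\
    (~~ f a -> exists2 b, b \in N & forall c, c \in P -> dist (emb a) b < dist (emb a) c).

Definition NN_size_pred (n : nat) (f : cube n -> bool) : pred nat :=
  fun m => `[< exists P N, is_NNrep f P N /\ size (P ++ N) = m >].

Lemma emb_inj n : injective (@emb n).
Proof.
move=> a b /matrixP H; apply/ffunP => i; have := H ord0 i; rewrite !mxE.
by case: (a i); case: (b i) => //= /eqP; rewrite ?oner_eq0 // eq_sym oner_eq0.
Qed.

Lemma dist_pos n (a b : cube n) : a != b -> 0 < dist (emb a) (emb b).
Proof.
move=> ab; rewrite sqrtr_gt0 lt_neqAle sumr_ge0 ?andbT; last by move=> i _; exact: sqr_ge0.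
have [i Hi] : exists i, a i != b i.
  by apply/existsP; apply: contraNT ab => /existsPn H; apply/eqP/ffunP => i; apply/eqP/negbNE/H.
rewrite eq_sym psumr_eq0; last by move=> j _; exact: sqr_ge0.
apply/allPn; exists i; first exact: mem_index_enum.
rewrite sqrf_eq0 !mxE subr_eq0.
by move: Hi; case: (a i); case: (b i) => //= _; rewrite ?oner_eq0 // eq_sym oner_eq0.
Qed.

Lemma dist_refl n (x : pt n) : dist x x = 0.
Proof. by rewrite /dist big1 ?sqrtr0 // => i _; rewrite subrr expr0n. Qed.

Lemma NN_exists n (f : cube n -> bool) : exists m, NN_size_pred f m.
Proof.
pose P := [seq emb a | a <- enum [pred a | f a]].
pose N := [seq emb a | a <- enum [pred a | ~~ f a]].
exists (size (P ++ N)); apply/asboolP; exists P, N; split => //; split.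
  rewrite -map_cat map_inj_uniq; last exact: emb_inj.
  rewrite cat_uniq !enum_uniq /= andbT; apply/hasPn => x.
  by rewrite !mem_enum !inE => Hx; apply/negP => Hy; move: Hx; rewrite Hy.
move=> a; split=> Ha.
  exists (emb a); first by apply: map_f; rewrite mem_enum.
  move=> c /mapP [a' Ha' ->]; rewrite dist_refl dist_pos //.
  by apply/negP => /eqP E; move: Ha'; rewrite mem_enum inE -E Ha.
exists (emb a); first by apply: map_f; rewrite mem_enum.
move=> c /mapP [a' Ha' ->]; rewrite dist_refl dist_pos //.
by apply/negP => /eqP E; move: Ha'; rewrite mem_enum inE -E (negbTE Ha).
Qed.

Definition NN (n : nat) (f : cube n -> bool) : nat := ex_minn (NN_exists f).

(* Main.v *)
Require Import Defs.
From HB Require Import structures.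
From mathcomp Require Import all_boot all_order all_algebra.
From mathcomp Require Import all_classical all_reals all_analysis.
From mathcomp Require Import Rstruct Rstruct_topology.
From Stdlib Require Import Rdefinitions.
From mathcomp Require Import ring lra zify.
Import Order.TTheory GRing.Theory Num.Theory.
Local Open Scope classical_set_scope.
Local Open Scope ring_scope.
Definition Vt (m : nat) := 'rV['F_2]_m.

Lemma addVV m (x : Vt m) : x + x = 0.
Proof. apply/matrixP => i j; rewrite !mxE; apply: addrr_pchar2; exact: pchar_Fp. Qed.

Lemma V_eq m (x y : Vt m) : x + y = 0 -> x = y.
Proof. by move=> H; apply: (addIr y); rewrite H addVV. Qed.

Lemma card_Vt m : #|Vt m| = expn 2 m.
Proof. by rewrite /Vt card_mx card_Fp // mul1n. Qed.

Definition enz m : seq (Vt m) := enum (predC1 (0 : Vt m)).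

Lemma size_enz m : size (enz m) = (expn 2 m).-1.
Proof. by rewrite /enz -cardE cardC1 card_Vt. Qed.

Definition vv m {n} (i : 'I_n) : Vt m := nth 0 (enz m) i.

Lemma vv_surj m n (s : Vt m) : (expn 2 m <= n.+1)%nat -> s != 0 -> exists j : 'I_n, vv m j = s.
Proof.
move=> Hm Hs.
have Hin : s \in enz m by rewrite /enz mem_enum inE.
have Hlt : (index s (enz m) < n)%nat.
  have := index_mem s (enz m); rewrite Hin size_enz => H.
  by apply: (leq_trans H); rewrite -ltnS prednK // expn_gt0.
by exists (Ordinal Hlt); rewrite /vv /= nth_index.
Qed.

Lemma vv_inj m n (i k : 'I_n) : vv m i = vv m k -> vv m i != 0 -> i = k.
Proof.
move=> E Hi.
have Hk : vv m k != 0 by rewrite -E.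
have lti : (i < size (enz m))%nat.
  by rewrite ltnNge; apply: contra Hi => H; rewrite /vv nth_default.
have ltk : (k < size (enz m))%nat.
  by rewrite ltnNge; apply: contra Hk => H; rewrite /vv nth_default.
apply: val_inj; apply/eqP; rewrite -(nth_uniq 0 lti ltk) ?enum_uniq //.
by apply/eqP.
Qed.

Definition syn m {n} (z : cube n) : Vt m := \sum_(i < n) (if z i then vv m i else 0).

Definition flip {n} (z : cube n) (j : 'I_n) : cube n :=
  [ffun i => if i == j then ~~ z i else z i].

Lemma flipK n (z : cube n) j : flip (flip z j) j = z.
Proof. by apply/ffunP => i; rewrite !ffunE; case: eqP => // ->; rewrite negbK. Qed.
Arguments flipK {n} z j.

Lemma flip_inj n (j : 'I_n) : injective (fun z : cube n => flip z j).
Proof. by move=> x y E; rewrite -(flipK x j) -(flipK y j) E. Qed.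

Lemma syn_flip m n (z : cube n) j : syn m (flip z j) = syn m z + vv m j.
Proof.
rewrite /syn (bigD1 j) //= [in RHS](bigD1 j) //= ffunE eqxx.
have -> : \sum_(i < n | i != j) (if flip z j i then vv m i else 0) =
          \sum_(i < n | i != j) (if z i then vv m i else 0).
  by apply: eq_bigr => i /negbTE Hi; rewrite ffunE Hi.
case: (z j) => /=.
  by rewrite add0r addrAC addVV add0r.
by rewrite add0r addrC.
Qed.

Lemma card_inj_le (T : finType) (A B : {set T}) (g : T -> T) :
  injective g -> (forall x, x \in A -> g x \in B) -> (#|A| <= #|B|)%nat.
Proof.
move=> Hg HAB; rewrite -(card_imset A Hg); apply: subset_leq_card.
by apply/fintype.subsetP => y /finset.imsetP [z Hz ->]; apply: HAB.
Qed.

Definition CS m n := [set z : cube n | syn m z == 0]%SET.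

Lemma card_CS m n : (expn 2 m <= n.+1)%nat -> (#|CS m n| * expn 2 m <= expn 2 n)%nat.
Proof.
move=> Hm.
have Hc : #|cube n| = (expn 2 n)%nat by rewrite /cube card_ffun card_bool card_ord.
have Hpart : #|cube n| = (\sum_(s : Vt m) #|[set z : cube n | syn m z == s]%SET|)%nat.
  rewrite -sum1_card (partition_big (fun z => syn m z) predT) //=.
  by apply: eq_bigr => s _; rewrite sum1dep_card.
have Hle : forall s : Vt m, (#|CS m n| <= #|[set z : cube n | syn m z == s]%SET|)%nat.
  move=> s; have [->|Hs] := eqVneq s 0; first by [].
  have [j Hj] := vv_surj m n s Hm Hs.
  apply: (@card_inj_le _ (CS m n) _ (fun z => flip z j)); first exact: flip_inj.
  move=> z Hz.
  by rewrite inE syn_flip; move: Hz; rewrite inE => /eqP ->; rewrite add0r Hj.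
rewrite -Hc Hpart -card_Vt mulnC -sum_nat_const.
by apply: leq_sum => s _; apply: Hle.
Qed.

Definition del n : R := (((8 * n)%nat)%:R)^-1.
Definition qco (d : R) (ci ti : bool) : R :=
  if ci then (if ti then 1 - d else 1 + d) else (if ti then d else - d).
Definition qpt {n} (f : cube n -> bool) (c : cube n) : pt n :=
  \row_i qco (del n) (c i) (f (flip c i) != f c).
Definition key {n} (f : cube n -> bool) (c : cube n) (b : bool) : pt n :=
  if b then emb c else qpt f c.
Definition D2 {n} (x y : pt n) : R := \sum_(i < n) (x ord0 i - y ord0 i) ^+ 2.
Definition hamR {n} (a c : cube n) : R := \sum_(i < n) ((a i != c i)%:R).

Lemma natbE (b : bool) : ((b : nat)%:R : R) = if b then 1 else 0.
Proof. by case: b. Qed.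

Lemma termE d (ai ci ti : bool) : ((ai : nat)%:R - qco d ci ti) ^+ 2 =
  if ai == ci then d ^+ 2 else (if ti then (1 - d) ^+ 2 else (1 + d) ^+ 2).
Proof. by rewrite natbE; case: ai; case: ci; case: ti => /=; ring. Qed.

Lemma termE_emb (ai ci : bool) : ((ai : nat)%:R - (ci : nat)%:R) ^+ 2 = (ai != ci)%:R :> R.
Proof. by case: ai; case: ci => /=; rewrite ?mulr1n ?mulr0n; ring. Qed.

Lemma D2_emb n (a c : cube n) : D2 (emb a) (emb c) = hamR a c.
Proof. by apply: eq_bigr => i _; rewrite !mxE termE_emb. Qed.

Lemma D2_q n f (a c : cube n) : D2 (emb a) (qpt f c) =
  \sum_(i < n) (if a i == c i then del n ^+ 2 else
    (if f (flip c i) != f c then (1 - del n) ^+ 2 else (1 + del n) ^+ 2)).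
Proof. by apply: eq_bigr => i _; rewrite !mxE termE. Qed.

Lemma hamR_card n (a c : cube n) : hamR a c = (#|[set i | a i != c i]%SET|)%:R.
Proof.
transitivity (\sum_(i in [set i | a i != c i]%SET) (1%R : R)); last by rewrite sumr_const.
rewrite big_mkcond; apply: eq_bigr => i _; rewrite inE; by case: (a i != c i).
Qed.

Lemma ham0 n (a c : cube n) : #|[set i | a i != c i]%SET| = 0%nat -> a = c.
Proof.
move/eqP; rewrite cards_eq0 => /eqP H; apply/ffunP => i; apply/eqP.
by have := finset.in_set0 i; rewrite -H inE => /negbFE.
Qed.

Lemma ham1 n (a c : cube n) : #|[set i | a i != c i]%SET| = 1%nat -> exists k, c = flip a k.
Proof.
move/eqP/cards1P => [k Hk]; exists k; apply/ffunP => i; rewrite ffunE.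
have Hi : (a i != c i) = (i == k) by have := f_equal (fun S : {set 'I_n} => i \in S) Hk; rewrite /= !inE.
case: (i =P k) Hi => [-> |_] Hi.
  by move: Hi; case: (a k); case: (c k).
move: Hi; case: (i =P k) => // _; by case: (a i); case: (c i).
Qed.

Arguments ham0 {n a c}. Arguments ham1 {n a c}.

Lemma hamR_ge0 n (a c : cube n) : 0 <= hamR a c.
Proof. by rewrite /hamR; apply: sumr_ge0 => i _; rewrite ler0n. Qed.

Lemma D2_lb n f (a c : cube n) b : 0 <= del n ->
  (1 - 2 * del n) * hamR a c <= D2 (emb a) (key f c b).
Proof.
move=> hd; case: b => /=.
  by rewrite D2_emb; have := hamR_ge0 n a c => h; nra.
rewrite D2_q /hamR mulr_sumr; apply: ler_sum => i _.
case E: (a i == c i); rewrite ?E /= ?mulr0n ?mulr1n ?mulr0 ?mulr1.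
  by nra.
by case: (f (flip c i) != f c); nra.
Qed.

Lemma del_facts n : (0 < n)%nat -> 0 < del n /\ del n < 1/4 /\ n%:R * del n = 1/8.
Proof.
move=> n0.
have nR : 0 < (n%:R : R) by rewrite ltr0n.
have hd0 : 0 < del n by rewrite /del invr_gt0 ltr0n muln_gt0.
have hnd : n%:R * del n = 1/8.
  rewrite /del natrM invfM mulrCA mulfV ?mulr1 ?div1r //.
  by rewrite gt_eqF.
split => //; split => //.
have n1 : 1 <= (n%:R : R) by rewrite ler1n.
nra.
Qed.

Lemma dist_lt n (x y z : pt n) : D2 x y < D2 x z -> dist x y < dist x z.
Proof.
move=> H.
have H0 : 0 <= D2 x y by apply: sumr_ge0 => i _; apply: sqr_ge0.
by rewrite /dist ltr_sqrt //; apply: le_lt_trans H0 H.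
Qed.

Lemma coord_inj n f (c c' : cube n) b b' i :
  (0 < del n) -> del n < 1/4 ->
  key f c b ord0 i = key f c' b' ord0 i -> c i = c' i /\ b = b'.
Proof.
move=> hd0 hd4; rewrite /key /qpt.
case: b; case: b'; rewrite !mxE /qco ?natbE;
  move: (f (flip c i) != f c) (f (flip c' i) != f c') => t t';
  case: (c i); case: (c' i); case: t; case: t' => /=;
  try (by move=> _; split); move=> E; exfalso; lra.
Qed.

Lemma key_inj n f (c c' : cube n) b b' : (0 < n)%nat ->
  key f c b = key f c' b' -> c = c' /\ b = b'.
Proof.
move=> n0 E.
have [hd0 [hd4 _]] := del_facts n n0.
have H : forall i, c i = c' i /\ b = b'.
  by move=> i; apply: (coord_inj n f c c' b b' i hd0 hd4); rewrite E.
split; first by apply/ffunP => i; case: (H i).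
by case: (H (Ordinal n0)).
Qed.

Lemma per_input m n (f : cube n -> bool) (a : cube n) :
  (0 < n)%nat -> (expn 2 m <= n.+1)%nat ->
  exists c, c \in CS m n /\ exists b0, (b0 == f c) = f a /\
    forall c' b, c' \in CS m n -> (c', b) != (c, b0) ->
      D2 (emb a) (key f c b0) < D2 (emb a) (key f c' b).
Proof.
move=> n0 Hm; have [hd0 [hd4 hnd]] := del_facts n n0.
have sumd : \sum_(i < n) del n ^+ 2 = n%:R * del n * del n.
  by rewrite sumr_const card_ord -mulr_natl; ring.
have hdd : n%:R * del n * del n = del n / 8.
  by rewrite hnd div1r mulrC.
have Hlb := fun (c' : cube n) b => D2_lb n f a c' b (ltW hd0).
case: (eqVneq (syn m a) 0) => Ha.
  exists a; split; first by rewrite inE Ha.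
  exists true; split; first by case: (f a).
  move=> c' b Hc' Hne.
  have L0 : D2 (emb a) (key f a true) = 0.
    by rewrite /= D2_emb /hamR big1 // => i _; rewrite eqxx.
  rewrite L0.
  case: (eqVneq c' a) => [Ec|Nc].
    subst c'.
    have Hb : b = false by move: Hne; rewrite xpair_eqE eqxx /=; case: b.
    subst b; rewrite /= D2_q.
    under eq_bigr => i _ do rewrite eqxx.
    rewrite sumd hdd; lra.
  have H1 : 1 <= hamR a c'.
    rewrite hamR_card.
    case Ek: #|[set i | a i != c' i]%SET| => [|k].
      by move: Nc; rewrite (ham0 Ek) eqxx.
    by rewrite ler1n.
  have := Hlb c' b; nra.
have [j Hj] := vv_surj m n (syn m a) Hm Ha.
set c := flip a j.
have Hc : syn m c = 0 by rewrite /c syn_flip -Hj addVV.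
have Hac : a = flip c j by rewrite /c flipK.
have Hcj : c j = ~~ a j by rewrite /c ffunE eqxx.
have Hci : forall i, i != j -> c i = a i by move=> i Hi; rewrite /c ffunE (negbTE Hi).
exists c; split; first by rewrite inE Hc.
exists (f a == f c); split; first by case: (f a); case: (f c).
move=> c' b Hc' Hne.
have Eemb : D2 (emb a) (emb c) = 1.
  rewrite D2_emb hamR_card.
  have -> : [set i | a i != c i]%SET = [set j]%SET.
    apply/setP => i; rewrite !inE.
    case: (i =P j) => [->|/eqP Hi]; first by rewrite Hcj; case: (a j).
    by rewrite Hci // eqxx.
  by rewrite cards1.
have Eq : D2 (emb a) (qpt f c) =
    (if f a != f c then (1 - del n) ^+ 2 else (1 + del n) ^+ 2) + (del n / 8 - del n ^+ 2).
  rewrite D2_q (bigD1 j) //= Hcj -Hac.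
  have -> : (a j == ~~ a j) = false by case: (a j).
  congr (_ + _).
  have Hs : \sum_(i < n | i != j) del n ^+ 2 = del n / 8 - del n ^+ 2.
    by rewrite -hdd -sumd [in RHS](bigD1 j) //= addrC addrK.
  rewrite -Hs.
  by apply: eq_bigr => i Hi; rewrite Hci // eqxx.
have Hoth : forall c2 b2, c2 \in CS m n -> c2 != c -> 1 < D2 (emb a) (key f c2 b2).
  move=> c2 b2 H2 N2.
  have H2' : 2 <= hamR a c2.
    rewrite hamR_card.
    case Ek: #|[set i | a i != c2 i]%SET| => [|[|k]].
    - by move: H2; rewrite inE -(ham0 Ek) (negbTE Ha).
    - have [k Ek2] := ham1 Ek.
      have Hk : syn m a = vv m k.
        by apply: V_eq; move: H2; rewrite inE Ek2 syn_flip => /eqP.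
      have Hjk : j = k by apply: (vv_inj m n j k); [rewrite Hj Hk | rewrite Hj].
      by move: N2; rewrite Ek2 -Hjk eqxx.
    - by rewrite ler_nat.
  by have := Hlb c2 b2; nra.
case Et: (f a != f c).
  have Eb : (f a == f c) = false by apply/negbTE; rewrite Et.
  rewrite Eb /= Eq Et.
  case: (eqVneq c' c) => [Ec|Nc].
    subst c'.
    have Hb : b = true by move: Hne; rewrite Eb xpair_eqE eqxx /=; case: b.
    subst b; rewrite /= Eemb; nra.
  by have := Hoth c' b Hc' Nc; nra.
have Eb : (f a == f c) = true by apply/negbFE; rewrite Et.
rewrite Eb /= Eemb.
case: (eqVneq c' c) => [Ec|Nc].
  subst c'.
  have Hb : b = false by move: Hne; rewrite Eb xpair_eqE eqxx /=; case: b.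
  subst b; rewrite /= Eq Et; nra.
exact: Hoth.
Qed.

Lemma NN_bound n (f : cube n -> bool) : (0 < n)%nat ->
  (NN f * n <= expn 2 (n + 2))%nat.
Proof.
move=> n0.
set m := trunc_log 2 n.+1.
have Hm1 : (expn 2 m <= n.+1)%nat by apply: trunc_logP.
have Hm2 : (n.+1 < expn 2 m.+1)%nat by apply: trunc_log_ltn.
set cs := enum (CS m n).
pose P := [seq key f c (f c) | c <- cs].
pose N := [seq key f c (~~ f c) | c <- cs].
have Hrep : is_NNrep f P N.
  split.
    rewrite cat_uniq; apply/and3P; split.
    - rewrite map_inj_uniq ?enum_uniq // => c c' E.
      by case: (key_inj n f c c' _ _ n0 E).
    - apply/hasPn => x /mapP [c _ ->]; apply/negP => /mapP [c' _ E].
      have [E1 E2] := key_inj n f c c' _ _ n0 E; subst c'.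
      by move: E2; case: (f c).
    - rewrite map_inj_uniq ?enum_uniq // => c c' E.
      by case: (key_inj n f c c' _ _ n0 E).
  move=> a.
  have [c [Hc [b0 [Hlab Hlt]]]] := per_input m n f a n0 Hm1.
  split => Hfa.
    have Eb : b0 = f c by apply/eqP; rewrite Hlab.
    subst b0; exists (key f c (f c)); first by apply/mapP; exists c; rewrite ?mem_enum.
    move=> x /mapP [c' Hc' ->]; apply: dist_lt; apply: Hlt; first by rewrite mem_enum in Hc'.
    apply/negP; rewrite xpair_eqE => /andP [/eqP E1 /eqP E2]; subst c'.
    by move: E2; case: (f c).
  have Eb : b0 = ~~ f c by move: Hlab; rewrite (negbTE Hfa); case: (b0); case: (f c).
  subst b0; exists (key f c (~~ f c)); first by apply/mapP; exists c; rewrite ?mem_enum.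
  move=> x /mapP [c' Hc' ->]; apply: dist_lt; apply: Hlt; first by rewrite mem_enum in Hc'.
  apply/negP; rewrite xpair_eqE => /andP [/eqP E1 /eqP E2]; subst c'.
  by move: E2; case: (f c).
have Hsize : size (P ++ N) = (2 * #|CS m n|)%nat.
  by rewrite size_cat !size_map /cs -cardE addnn -mul2n.
have HNN : (NN f <= 2 * #|CS m n|)%nat.
  rewrite /NN; case: ex_minnP => k _ Hmin; apply: Hmin.
  by apply/asboolP; exists P, N; split.
have HC := card_CS m n Hm1.
have h1 : (n <= 2 * expn 2 m)%nat by rewrite -expnS; apply: ltnW; apply: ltn_trans Hm2.
have -> : expn 2 (n + 2) = (4 * expn 2 n)%nat by rewrite expnD mulnC.
move: HNN HC h1; set C := #|CS m n|; set E := expn 2 m; set F := expn 2 n; nia.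
Qed.

Theorem theorem3 :
  exists eps : nat -> R,
    eps @ \oo --> (0 : R) /\
    forall (n : nat) (f : cube n -> bool), (0 < n)%nat ->
      (NN f)%:R <= (1 + eps n) * (2 ^+ (n + 2) / n%:R).
Proof.
exists (fun _ => 0); split; first exact: cvg_cst.
move=> n f n0.
rewrite addr0 mul1r ler_pdivlMr ?ltr0n // -natrM -(natrX _ 2) ler_nat.
exact: NN_bound.
Qed.
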